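(* Let $q>1$, let $k$ be a positive integer and $0\le r<k$ an integer. For $s\in\mathbb C$ arbitrary when $|z|<1$, or $\Re(s)>k$ when $|z|=1$ (the variable of integration $a$ ranging over $a\in\mathbb C\setminus\mathbb Z_0^-$), $$\int_0^1\Phi_{k-r}\bigl(z,s,a+(k-r)\bigr)\,d_qa=z^{-(k-r)}\sum_{l=0}^\infty\binom{-s}{l}\frac{\mathrm{Li}_{k-r}(z,s+l)}{[l+1]_q}.$$
   Context: $\mathbb Z_0^-=\{0,-1,-2,\ldots\}$. For $q>1$, the Jackson integral is $\int_0^1 f(a)\,d_qa=(q-1)\sum_{n=1}^\infty f(q^{-n})q^{-n}$, and $[x]_q=\frac{q^{x}-1}{q-1}$. The multiple Hurwitz-Lerch zeta function is $\Phi_j(z,s,a)=\sum_{m_1,\ldots,m_j=0}^\infty\frac{z^{m_1+\dots+m_j}}{(m_1+\dots+m_j+a)^{s}}$, and the multiple Lipschitz-Lerch zeta function is $\mathrm{Li}_j(z,s)=\sum_{m_1,\ldots,m_j=1}^\infty\frac{z^{m_1+\dots+m_j}}{(m_1+\dots+m_j)^{s}}$, both with $s\in\mathbb C$ when $|z|<1$ and $\Re(s)>j$ when $|z|=1$. $\binom{-s}{l}=\frac{(-s)(-s-1)\cdots(-s-l+1)}{l!}$. *)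

(* Defs.v *)
From Stdlib Require Import Reals.
From Coquelicot Require Import Coquelicot.

Open Scope R_scope.

Definition csum (a : nat -> C) : C :=
  (Series (fun n => Re (a n)), Series (fun n => Im (a n))).

(* x^s = exp(s ln x) for a positive real base x and complex exponent s. *)
Definition cpow (x : R) (s : C) : C :=
  let t := Im s * ln x in
  (exp (Re s * ln x) * cos t, exp (Re s * ln x) * sin t).

(* Iterated multiple sum  sum_{m_1,...,m_j >= b} g(m_1 + ... + m_j). *)
Fixpoint msum (b j : nat) (g : nat -> C) : C :=
  match j with
  | O => g O
  | S j' => csum (fun m => msum b j' (fun t => g (m + b + t)%nat))
  end.

Definition Phi (j : nat) (z s : C) (a : R) : C :=
  msum 0 j (fun M => Cmult (pow_n z M) (Cinv (cpow (INR M + a) s))).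

Definition Li (j : nat) (z s : C) : C :=
  msum 1 j (fun M => Cmult (pow_n z M) (Cinv (cpow (INR M) s))).

Definition jackson01 (q : R) (f : R -> C) : C :=
  Cmult (RtoC (q - 1))
    (csum (fun n => Cmult (f (/ q ^ (S n))) (RtoC (/ q ^ (S n))))).

Definition qnum (q : R) (x : nat) : R := (q ^ x - 1) / (q - 1).

Fixpoint cfalling (w : C) (l : nat) : C :=
  match l with
  | O => RtoC 1
  | S l' => Cmult (cfalling w l') (Cminus w (RtoC (INR l')))
  end.
Definition cbinom (w : C) (l : nat) : C :=
  Cmult (cfalling w l) (Cinv (RtoC (INR (Factorial.fact l)))).

(* Main.v *)
Require Import Defs.
From Stdlib Require Import Reals Lra Lia FunctionalExtensionality.
From Coquelicot Require Import Coquelicot.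
Open Scope R_scope.

Lemma exs_le (u b : nat -> R) : (forall n, Rabs (u n) <= b n) -> ex_series b -> ex_series u.
Proof. intros H Hb. apply (ex_series_le u b); auto. Qed.

Lemma exs_abs_le (u b : nat -> R) : (forall n, Rabs (u n) <= b n) -> ex_series b ->
  ex_series (fun n => Rabs (u n)).
Proof. intros H Hb. apply (exs_le _ b); auto. intros n; rewrite Rabs_Rabsolu; auto. Qed.

Lemma exs_plus (a b : nat -> R) : ex_series a -> ex_series b -> ex_series (fun n => a n + b n).
Proof. intros Ha Hb. exact (ex_series_plus a b Ha Hb). Qed.
Lemma exs_minus (a b : nat -> R) : ex_series a -> ex_series b -> ex_series (fun n => a n - b n).
Proof. intros Ha Hb. exact (ex_series_minus a b Ha Hb). Qed.
Lemma exs_scal_l (c : R) (a : nat -> R) : ex_series a -> ex_series (fun n => c * a n).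
Proof. intros Ha. exact (ex_series_scal_l c a Ha). Qed.

Lemma ser_nonneg (v : nat -> R) : (forall n, 0 <= v n) -> ex_series v -> 0 <= Series v.
Proof.
  intros H Hv. replace 0 with (Series (fun _ => 0)).
  apply Series_le; auto. intros; split; [lra|auto].
  rewrite (Series_ext _ (fun n => 0 * v n)). rewrite Series_scal_l; ring. intros; ring.
Qed.

Lemma ser_abs_bound (u b : nat -> R) : (forall n, Rabs (u n) <= b n) -> ex_series b ->
  Rabs (Series u) <= Series b.
Proof.
  intros H Hb. eapply Rle_trans. apply Series_Rabs. apply (exs_abs_le _ b); auto.
  apply Series_le; auto. intros; split; auto. apply Rabs_pos.
Qed.

Lemma ser_split (v : nat -> R) N : ex_series v ->
  Series v = sum_f_R0 v N + Series (fun l => v (S N + l)%nat).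
Proof. intros Hv. rewrite (Series_incr_n v (S N)); auto. lia. Qed.

Lemma series_sum_f (u : nat -> nat -> R) N : (forall l, ex_series (fun m => u m l)) ->
  ex_series (fun m => sum_f_R0 (u m) N) /\
  Series (fun m => sum_f_R0 (u m) N) = sum_f_R0 (fun l => Series (fun m => u m l)) N.
Proof.
  intros H. induction N as [|N IH]; simpl.
  - split; auto.
  - destruct IH as [IH1 IH2]. split.
    + apply exs_plus; auto.
    + rewrite Series_plus; auto. rewrite IH2. reflexivity.
Qed.

Lemma is_series_lim (v : nat -> R) : ex_series v ->
  is_lim_seq (fun N => sum_f_R0 v N) (Series v).
Proof.
  intros Hv. apply Series_correct in Hv.
  apply (is_lim_seq_ext (sum_n v)). intros; apply sum_n_Reals. exact Hv.
Qed.

Lemma tail_lim (e : nat -> R) : ex_series e ->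
  is_lim_seq (fun N => Series (fun l => e (S N + l)%nat)) 0.
Proof.
  intros He. apply (is_lim_seq_ext (fun N => Series e - sum_f_R0 e N)).
  intros N. rewrite (ser_split e N); auto. ring.
  replace (Finite 0) with (Finite (Series e - Series e)) by (f_equal; ring).
  apply is_lim_seq_minus'. apply is_lim_seq_const. apply is_series_lim; auto.
Qed.

Lemma fubini_R (u : nat -> nat -> R) (A e : nat -> R) :
  (forall m l, Rabs (u m l) <= A m * e l) -> (forall m, 0 <= A m) -> (forall l, 0 <= e l) ->
  ex_series A -> ex_series e ->
  Series (fun m => Series (fun l => u m l)) = Series (fun l => Series (fun m => u m l)).
Proof.
  intros Hu HA He HsA Hse.
  assert (Hm : forall m, ex_series (fun l => u m l)).
  { intros m. apply (exs_le _ (fun l => A m * e l)); auto. apply exs_scal_l; auto. }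
  assert (Hl : forall l, ex_series (fun m => u m l)).
  { intros l. apply (exs_le _ (fun m => A m * e l)); auto. apply ex_series_scal_r; auto. }
  set (F := fun m => Series (fun l => u m l)).
  set (G := fun l => Series (fun m => u m l)).
  assert (HG : forall l, Rabs (G l) <= Series A * e l).
  { intros l. unfold G. rewrite <- Series_scal_r. apply ser_abs_bound; auto.
    apply ex_series_scal_r; auto. }
  assert (HsG : ex_series G).
  { apply (exs_le _ (fun l => Series A * e l)); auto. apply exs_scal_l; auto. }
  set (T := fun N => Series (fun l => e (S N + l)%nat)).
  assert (HT : forall N, 0 <= T N).
  { intros N. apply ser_nonneg; auto. apply ex_series_incr_n; auto. }
  assert (Hdiff : forall m N, Rabs (sum_f_R0 (u m) N - F m) <= A m * T N).
  { intros m N. unfold F. rewrite (ser_split (fun l => u m l) N); auto.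
    change (fun l : nat => u m l) with (u m).
    match goal with |- Rabs (?a - (?a + ?b)) <= _ => replace (a - (a + b)) with (- b) by ring end.
    rewrite Rabs_Ropp.
    unfold T. rewrite <- Series_scal_l. apply ser_abs_bound; auto.
    apply exs_scal_l. apply ex_series_incr_n; auto. }
  assert (HF : ex_series F).
  { apply (exs_le _ (fun m => A m * Series e)). intros m. unfold F.
    rewrite <- Series_scal_l. apply ser_abs_bound; auto. apply exs_scal_l; auto.
    apply ex_series_scal_r; auto. }
  assert (Hx : forall N, Rabs (sum_f_R0 G N - Series F) <= Series A * T N).
  { intros N. destruct (series_sum_f u N Hl) as [E1 E2]. fold G in E2. rewrite <- E2.
    rewrite <- Series_minus; auto. rewrite <- Series_scal_r.
    apply ser_abs_bound; auto. apply ex_series_scal_r; auto. }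
  assert (L1 : is_lim_seq (fun N => sum_f_R0 G N) (Series F)).
  { apply (is_lim_seq_le_le (fun N => Series F - Series A * T N) _ (fun N => Series F + Series A * T N)).
    intros N. specialize (Hx N). apply Rabs_le_between' in Hx. lra.
    replace (Finite (Series F)) with (Finite (Series F - Series A * 0)) by (f_equal; ring).
    apply is_lim_seq_minus'. apply is_lim_seq_const. apply is_lim_seq_mult'. apply is_lim_seq_const. apply tail_lim; auto.
    replace (Finite (Series F)) with (Finite (Series F + Series A * 0)) by (f_equal; ring).
    apply is_lim_seq_plus'. apply is_lim_seq_const. apply is_lim_seq_mult'. apply is_lim_seq_const. apply tail_lim; auto. }
  assert (L2 := is_series_lim G HsG).
  apply is_lim_seq_unique in L1. apply is_lim_seq_unique in L2. rewrite L1 in L2.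
  injection L2; auto.
Qed.

Definition N1 (x : C) : R := Rabs (Re x) + Rabs (Im x).

Lemma N1_pos x : 0 <= N1 x.
Proof. unfold N1; generalize (Rabs_pos (Re x)) (Rabs_pos (Im x)); lra. Qed.

Lemma N1_mult x y : N1 (Cmult x y) <= N1 x * N1 y.
Proof.
  destruct x as [a b], y as [c d]. unfold N1, Cmult, Re, Im; simpl.
  eapply Rle_trans. apply Rplus_le_compat; apply Rabs_triang.
  rewrite !Rabs_Ropp, !Rabs_mult.
  generalize (Rabs_pos a) (Rabs_pos b) (Rabs_pos c) (Rabs_pos d). nra.
Qed.

Lemma N1_RtoC r : N1 (RtoC r) = Rabs r.
Proof. unfold N1, RtoC, Re, Im; simpl. rewrite Rabs_R0; ring. Qed.

Lemma csum_ext (a b : nat -> C) : (forall n, a n = b n) -> csum a = csum b.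
Proof. intros H. unfold csum. f_equal; apply Series_ext; intros; rewrite H; auto. Qed.

Definition cex (a : nat -> C) := ex_series (fun n => Re (a n)) /\ ex_series (fun n => Im (a n)).

Lemma cex_dom (a : nat -> C) (b : nat -> R) : (forall n, N1 (a n) <= b n) -> ex_series b -> cex a.
Proof.
  intros H Hb. split; apply (exs_le _ b); auto; intros n; specialize (H n); unfold N1 in H;
  generalize (Rabs_pos (Re (a n))) (Rabs_pos (Im (a n))); lra.
Qed.

Lemma N1_csum (a : nat -> C) (b : nat -> R) : (forall n, N1 (a n) <= b n) -> ex_series b ->
  N1 (csum a) <= Series b.
Proof.
  intros H Hb. unfold N1 at 1.
  change (Re (csum a)) with (Series (fun n => Re (a n))).
  change (Im (csum a)) with (Series (fun n => Im (a n))).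
  assert (H1 : forall n, Rabs (Re (a n)) <= b n).
  { intros n; specialize (H n); unfold N1 in H; generalize (Rabs_pos (Im (a n))); lra. }
  assert (H2 : forall n, Rabs (Im (a n)) <= b n).
  { intros n; specialize (H n); unfold N1 in H; generalize (Rabs_pos (Re (a n))); lra. }
  assert (E1 := exs_abs_le _ b H1 Hb). assert (E2 := exs_abs_le _ b H2 Hb).
  eapply Rle_trans. apply Rplus_le_compat; apply Series_Rabs; auto.
  rewrite <- Series_plus; auto. apply Series_le; auto. intros n; split.
  generalize (Rabs_pos (Re (a n))) (Rabs_pos (Im (a n))); lra. apply H.
Qed.

Lemma csum_scal (c : C) (a : nat -> C) : cex a -> csum (fun n => Cmult c (a n)) = Cmult c (csum a).
Proof.
  intros [H1 H2]. destruct c as [c1 c2]. unfold csum, Cmult; simpl. f_equal.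
  - rewrite <- !Series_scal_l, <- Series_minus; try (apply exs_scal_l; auto). reflexivity.
  - rewrite <- !Series_scal_l, <- Series_plus; try (apply exs_scal_l; auto). reflexivity.
Qed.

Lemma fubini_C (X : nat -> nat -> C) (A e : nat -> R) :
  (forall m l, N1 (X m l) <= A m * e l) -> (forall m, 0 <= A m) -> (forall l, 0 <= e l) ->
  ex_series A -> ex_series e ->
  csum (fun m => csum (fun l => X m l)) = csum (fun l => csum (fun m => X m l)).
Proof.
  intros H HA He HsA Hse. unfold csum at 1 3. f_equal.
  - simpl. apply (fubini_R (fun m l => Re (X m l)) A e); auto.
    intros m l; specialize (H m l); unfold N1 in H; generalize (Rabs_pos (Im (X m l))); lra.
  - simpl. apply (fubini_R (fun m l => Im (X m l)) A e); auto.
    intros m l; specialize (H m l); unfold N1 in H; generalize (Rabs_pos (Re (X m l))); lra.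
Qed.

Fixpoint msumR (j : nat) (h : nat -> R) : R :=
  match j with
  | O => h O
  | S j' => Series (fun m => msumR j' (fun t => h (m + 0 + t)%nat))
  end.

Fixpoint summ (j : nat) (h : nat -> R) : Prop :=
  match j with
  | O => True
  | S j' => (forall m, summ j' (fun t => h (m + 0 + t)%nat)) /\
            ex_series (fun m => msumR j' (fun t => h (m + 0 + t)%nat))
  end.

Lemma msumR_nonneg j : forall h, (forall M, 0 <= h M) -> summ j h -> 0 <= msumR j h.
Proof.
  induction j as [|j IH]; intros h Hh Hs; simpl; auto.
  destruct Hs as [Hs1 Hs2]. apply ser_nonneg; auto.
Qed.

Lemma summ_le j : forall g h, (forall M, 0 <= g M <= h M) -> summ j h ->
  summ j g /\ msumR j g <= msumR j h.
Proof.
  induction j as [|j IH]; intros g h Hgh Hs; simpl.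
  - split; auto. apply Hgh.
  - destruct Hs as [Hs1 Hs2].
    assert (K : forall m, summ j (fun t => g (m + 0 + t)%nat) /\
       msumR j (fun t => g (m + 0 + t)%nat) <= msumR j (fun t => h (m + 0 + t)%nat)).
    { intros m. apply IH; auto. }
    assert (K0 : forall m, 0 <= msumR j (fun t => g (m + 0 + t)%nat)).
    { intros m. apply msumR_nonneg. intros; apply Hgh. apply K. }
    assert (Ex : ex_series (fun m => msumR j (fun t => g (m + 0 + t)%nat))).
    { apply (exs_le _ (fun m => msumR j (fun t => h (m + 0 + t)%nat))); auto.
      intros m. rewrite Rabs_pos_eq; auto. apply K. }
    split. split; auto. intros m; apply K.
    apply Series_le; auto. intros m; split; auto. apply K.
Qed.

Lemma summ_scal j : forall c h, 0 <= c -> summ j h ->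
  summ j (fun M => c * h M) /\ msumR j (fun M => c * h M) = c * msumR j h.
Proof.
  induction j as [|j IH]; intros c h Hc Hs; simpl.
  - auto.
  - destruct Hs as [Hs1 Hs2].
    assert (K := fun m => IH c (fun t => h (m + 0 + t)%nat) Hc (Hs1 m)).
    rewrite (Series_ext _ (fun m => c * msumR j (fun t => h (m + 0 + t)%nat))).
    2: intros m; apply K.
    rewrite Series_scal_l. split; auto. split. intros m; apply K.
    apply (ex_series_ext (fun m => c * msumR j (fun t => h (m + 0 + t)%nat))).
    intros m; symmetry; apply K. apply exs_scal_l; auto.
Qed.

Lemma msum_bound j : forall (G : nat -> C) h, (forall M, N1 (G M) <= h M) -> summ j h ->
  N1 (msum 0 j G) <= msumR j h.
Proof.
  induction j as [|j IH]; intros G h HG Hs; simpl; auto.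
  destruct Hs as [Hs1 Hs2]. apply N1_csum; auto.
Qed.

Lemma msum_ext b j : forall g g', (forall M, g M = g' M) -> msum b j g = msum b j g'.
Proof.
  intros g g' H. assert (g = g') by (apply functional_extensionality; auto). subst; auto.
Qed.

Lemma msum_scal j : forall (c : C) (G : nat -> C) h, (forall M, N1 (G M) <= h M) -> summ j h ->
  msum 0 j (fun M => Cmult c (G M)) = Cmult c (msum 0 j G).
Proof.
  induction j as [|j IH]; intros c G h HG Hs; simpl; auto.
  destruct Hs as [Hs1 Hs2].
  rewrite (csum_ext _ (fun m => Cmult c (msum 0 j (fun t => G (m + 0 + t)%nat)))).
  2: intros m; apply (IH c _ (fun t => h (m + 0 + t)%nat)); auto.
  apply csum_scal. apply (cex_dom _ _ (fun m => msum_bound j _ _ (fun t => HG (m+0+t)%nat) (Hs1 m)) Hs2).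
Qed.

Lemma msum_exchange j : forall (F : nat -> nat -> C) h e,
  (forall M l, N1 (F M l) <= h M * e l) -> (forall M, 0 <= h M) -> (forall l, 0 <= e l) ->
  summ j h -> ex_series e ->
  msum 0 j (fun M => csum (F M)) = csum (fun l => msum 0 j (fun M => F M l)).
Proof.
  induction j as [|j IH]; intros F h e HF Hh He Hs Hse; simpl.
  - apply csum_ext; auto.
  - destruct Hs as [Hs1 Hs2].
    rewrite (csum_ext _ (fun m => csum (fun l => msum 0 j (fun t => F (m + 0 + t)%nat l)))).
    2: intros m; apply (IH (fun t => F (m + 0 + t)%nat) (fun t => h (m + 0 + t)%nat) e); auto.
    apply (fubini_C _ (fun m => msumR j (fun t => h (m + 0 + t)%nat)) e); auto.
    + intros m l. rewrite Rmult_comm.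
      destruct (summ_scal j (e l) (fun t => h (m + 0 + t)%nat) (He l) (Hs1 m)) as [S1 S2].
      rewrite <- S2. apply msum_bound; auto. intros M. rewrite Rmult_comm; auto.
    + intros m. apply msumR_nonneg; auto.
Qed.

Lemma msum_shift j : forall g, msum 1 j g = msum 0 j (fun M => g (M + j)%nat).
Proof.
  induction j as [|j IH]; intros g; simpl.
  - f_equal.
  - apply csum_ext; intros m. rewrite IH. apply msum_ext. intros t. f_equal. lia.
Qed.

Lemma exp_le_mono x y : x <= y -> exp x <= exp y.
Proof. intros [H|H]. left; apply exp_increasing; auto. subst; lra. Qed.

Lemma ln_le_mono x y : 0 < x -> x <= y -> ln x <= ln y.
Proof. intros H [H1|H1]. left; apply ln_increasing; auto. subst; lra. Qed.

Lemma ln_le_sub1 x : 0 < x -> ln x <= x - 1.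
Proof.
  intros Hx. rewrite <- (ln_exp (x - 1)). apply ln_le_mono; auto.
  generalize (exp_ineq1_le (x - 1)); lra.
Qed.

Lemma tele_ineq p y : 1 < p -> 1 <= y ->
  Rpower y (-p) <= Rpower 2 p / (p - 1) * (Rpower y (1 - p) - Rpower (y + 1) (1 - p)).
Proof.
  intros Hp Hy. unfold Rpower.
  set (Ly := ln y). set (L1 := ln (y + 1)). set (L2 := ln 2).
  assert (HL : Ly - L1 <= - / (y + 1)).
  { unfold Ly, L1. assert (E : ln y - ln (y + 1) = ln (y / (y + 1))).
    { unfold Rdiv. rewrite ln_mult, ln_Rinv; try lra. apply Rinv_0_lt_compat; lra. }
    rewrite E. eapply Rle_trans. apply ln_le_sub1. apply Rdiv_lt_0_compat; lra.
    apply Req_le. field. lra. }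
  assert (HL2 : L1 <= L2 + Ly).
  { unfold L1, L2, Ly. rewrite <- ln_mult; try lra. apply ln_le_mono; lra. }
  assert (E1 : exp ((1 - p) * Ly) = exp ((1 - p) * L1) * exp ((1 - p) * (Ly - L1))).
  { rewrite <- exp_plus. f_equal. ring. }
  assert (B1 : 1 + (p - 1) * / (y + 1) <= exp ((1 - p) * (Ly - L1))).
  { eapply Rle_trans. 2: apply exp_ineq1_le. nra. }
  assert (E2 : exp ((1 - p) * L1) * / (y + 1) = exp (- p * L1)).
  { unfold L1. replace ((1 - p) * ln (y + 1)) with (- p * ln (y + 1) + ln (y + 1)) by ring.
    rewrite exp_plus, exp_ln by lra. field. lra. }
  assert (B2 : exp (- p * Ly) <= exp (p * L2) * exp (- p * L1)).
  { rewrite <- exp_plus. apply exp_le_mono. nra. }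
  assert (Pe : 0 < exp ((1 - p) * L1)) by apply exp_pos.
  assert (Pe2 : 0 < exp (p * L2)) by apply exp_pos.
  rewrite E1. eapply Rle_trans. apply B2. rewrite <- E2.
  apply Rle_trans with (exp (p * L2) / (p - 1) * (exp ((1 - p) * L1) * ((p - 1) * / (y + 1)))).
  apply Req_le. field. lra.
  apply Rmult_le_compat_l. apply Rlt_le, Rdiv_lt_0_compat; lra.
  assert (0 < / (y + 1)) by (apply Rinv_0_lt_compat; lra). nra.
Qed.

Lemma exs_of_partial (a : nat -> R) (l : R) :
  is_lim_seq (fun N => sum_f_R0 a N) l -> is_series a l.
Proof.
  intros H. unfold is_series. change (is_lim_seq (sum_n a) l).
  apply (is_lim_seq_ext (fun N => sum_f_R0 a N)); auto. intros; symmetry; apply sum_n_Reals.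
Qed.

Lemma pos_bounded_series (a : nat -> R) (B : R) : (forall n, 0 <= a n) ->
  (forall N, sum_f_R0 a N <= B) -> ex_series a /\ Series a <= B.
Proof.
  intros Ha HB. destruct (growing_cv (fun N => sum_f_R0 a N)) as [l Hl].
  - intros n. simpl. generalize (Ha (S n)); lra.
  - exists B. intros x [N ->]. auto.
  - apply is_lim_seq_Reals in Hl. assert (Hs := exs_of_partial _ _ Hl).
    split. exists l; auto. rewrite (is_series_unique _ _ Hs).
    assert (Hle := is_lim_seq_le _ (fun _ => B) l B HB Hl (is_lim_seq_const B)). simpl in Hle. auto.
Qed.

Lemma telescope (g : nat -> R) N : sum_f_R0 (fun m => g m - g (S m)) N = g O - g (S N).
Proof. induction N; simpl; auto. rewrite IHN. ring. Qed.

Lemma sum_scal_l (c : R) (a : nat -> R) N : sum_f_R0 (fun m => c * a m) N = c * sum_f_R0 a N.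
Proof. induction N; simpl; auto. rewrite IHN; ring. Qed.

Lemma pseries_tail p c : 1 < p -> 1 <= c ->
  ex_series (fun m => Rpower (INR m + c) (-p)) /\
  Series (fun m => Rpower (INR m + c) (-p)) <= Rpower 2 p / (p - 1) * Rpower c (1 - p).
Proof.
  intros Hp Hc. set (K := Rpower 2 p / (p - 1)).
  assert (HK : 0 <= K). { unfold K. apply Rlt_le, Rdiv_lt_0_compat. apply exp_pos. lra. }
  set (g := fun m => Rpower (INR m + c) (1 - p)).
  apply pos_bounded_series.
  - intros n. apply Rlt_le, exp_pos.
  - intros N. apply Rle_trans with (sum_f_R0 (fun m => K * (g m - g (S m))) N).
    + apply sum_Rle. intros m _. unfold g. rewrite S_INR.
      replace (INR m + 1 + c) with ((INR m + c) + 1) by ring. apply tele_ineq; auto.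
      generalize (pos_INR m); lra.
    + rewrite sum_scal_l, telescope. unfold g.
      replace (INR 0 + c) with c by (simpl; ring).
      assert (0 < Rpower (INR (S N) + c) (1 - p)) by apply exp_pos. nra.
Qed.

Fixpoint Kp (j : nat) (p : R) : R :=
  match j with
  | O => 1
  | S j' => Kp j' p * (Rpower 2 (p - INR j') / (p - INR j' - 1))
  end.

Lemma summ_pow j : forall p c, INR j < p -> 1 <= c ->
  0 <= Kp j p /\ summ j (fun M => Rpower (INR M + c) (-p)) /\
  msumR j (fun M => Rpower (INR M + c) (-p)) <= Kp j p * Rpower c (INR j - p).
Proof.
  induction j as [|j IH]; intros p c Hp Hc; cbn [msumR summ Kp].
  - simpl INR. split. lra. split; auto. rewrite Rplus_0_l. replace (0 - p) with (-p) by ring. lra.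
  - rewrite S_INR in Hp.
    assert (E : forall m, (fun t => Rpower (INR (m + 0 + t) + c) (-p)) =
                          (fun t => Rpower (INR t + (INR m + c)) (-p))).
    { intros m. apply functional_extensionality. intros t. f_equal.
      rewrite !plus_INR. simpl. ring. }
    assert (Hm : forall m, 0 <= Kp j p /\ summ j (fun t => Rpower (INR t + (INR m + c)) (-p)) /\
       msumR j (fun t => Rpower (INR t + (INR m + c)) (-p)) <= Kp j p * Rpower (INR m + c) (INR j - p)).
    { intros m. apply IH. lra. generalize (pos_INR m); lra. }
    destruct (Hm O) as [HK _].
    set (p' := p - INR j).
    destruct (pseries_tail p' c) as [T1 T2]. unfold p'; lra. auto.
    assert (HK' : 0 <= Rpower 2 p' / (p' - 1)).
    { apply Rlt_le, Rdiv_lt_0_compat. apply exp_pos. unfold p'; lra. }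
    assert (Dom : forall m, 0 <= msumR j (fun t => Rpower (INR t + (INR m + c)) (-p)) <=
                            Kp j p * Rpower (INR m + c) (- p')).
    { intros m. destruct (Hm m) as [_ [S1 S2]]. split.
      apply msumR_nonneg; auto. intros; apply Rlt_le, exp_pos.
      replace (- p') with (INR j - p) by (unfold p'; ring). auto. }
    assert (Ex : ex_series (fun m => msumR j (fun t => Rpower (INR t + (INR m + c)) (-p)))).
    { apply (exs_le _ (fun m => Kp j p * Rpower (INR m + c) (- p'))).
      intros m. rewrite Rabs_pos_eq; apply Dom. apply exs_scal_l; auto. }
    split. apply Rmult_le_pos; auto. split.
    + split. intros m. rewrite E. apply Hm. 
      apply (ex_series_ext (fun m => msumR j (fun t => Rpower (INR t + (INR m + c)) (-p)))); auto.
      intros m; rewrite E; auto.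
    + rewrite (Series_ext _ (fun m => msumR j (fun t => Rpower (INR t + (INR m + c)) (-p)))).
      2: intros m; rewrite E; auto.
      eapply Rle_trans. apply Series_le. apply Dom. apply exs_scal_l; auto.
      rewrite Series_scal_l. rewrite Rmult_assoc. apply Rmult_le_compat_l; auto.
      replace (INR (S j) - p) with (1 - p') by (unfold p'; rewrite S_INR; ring). auto.
Qed.

Lemma nat_unbounded (A : R) : exists n : nat, A < INR n.
Proof.
  destruct (archimed (Rabs A)) as [H _].
  assert (Hp : (0 <= up (Rabs A))%Z). { apply le_IZR. generalize (Rabs_pos A); lra. }
  exists (Z.to_nat (up (Rabs A))). rewrite INR_IZR_INZ, Znat.Z2Nat.id by auto.
  generalize (Rle_abs A); lra.
Qed.

Lemma geo_poly (rho c e : R) : 0 < rho < 1 -> 1 <= c ->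
  exists K, 0 <= K /\ forall M : nat, rho ^ M * Rpower (INR M + c) e <= K.
Proof.
  intros Hr Hc. set (e' := Rmax e 1).
  assert (He' : 1 <= e') by apply Rmax_r.
  set (lam := - ln rho).
  assert (Hl : 0 < lam). { unfold lam. generalize (ln_increasing rho 1 (proj1 Hr) (proj2 Hr)). rewrite ln_1. lra. }
  set (eps := lam / e').
  assert (Heps : 0 < eps) by (unfold eps; apply Rdiv_lt_0_compat; lra).
  exists (exp (lam * c - e' - e' * ln eps)). split. apply Rlt_le, exp_pos.
  intros M. set (X := INR M + c). assert (HX : 1 <= X) by (unfold X; generalize (pos_INR M); lra).
  rewrite <- (Rpower_pow M rho) by lra.
  apply Rle_trans with (Rpower rho (INR M) * Rpower X e').
  { apply Rmult_le_compat_l. apply Rlt_le, exp_pos. apply Rle_Rpower; auto. apply Rmax_l. }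
  unfold Rpower. rewrite <- exp_plus. apply exp_le_mono.
  assert (HlnX : ln X <= eps * X - 1 - ln eps).
  { assert (H1 := ln_le_sub1 (eps * X)). rewrite ln_mult in H1; try lra. nra. }
  replace (ln rho) with (- lam) by (unfold lam; ring).
  assert (e' * ln X <= e' * (eps * X - 1 - ln eps)) by (apply Rmult_le_compat_l; lra).
  replace (e' * (eps * X - 1 - ln eps)) with (lam * X - e' - e' * ln eps) in H
    by (unfold eps; field; lra).
  replace (lam * X) with (lam * INR M + lam * c) in H by (unfold X; ring). lra.
Qed.

Fixpoint Dn (W : R) (n : nat) : R :=
  match n with
  | O => 1
  | S n' => Dn W n' * ((W + INR n') / (INR n' + 1))
  end.


Lemma Dn_nonneg W n : 0 <= W -> 0 <= Dn W n.
Proof.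
  intros HW. induction n; simpl. lra. apply Rmult_le_pos; auto.
  apply Rmult_le_pos. generalize (pos_INR n); lra. apply Rlt_le, Rinv_0_lt_compat.
  generalize (pos_INR n); lra.
Qed.

Lemma term_le_sum (x : nat -> R) N n : (forall i, 0 <= x i) -> (n <= N)%nat -> x n <= sum_f_R0 x N.
Proof.
  intros Hx. induction N; intros Hn.
  - replace n with O by lia. simpl; lra.
  - simpl. destruct (Nat.eq_dec n (S N)) as [->|Hne]. generalize (cond_pos_sum x N); intros.
    assert (0 <= sum_f_R0 x N). { apply cond_pos_sum; auto. } lra.
    assert (x n <= sum_f_R0 x N) by (apply IHN; lia). generalize (Hx (S N)); lra.
Qed.

Lemma Dn_geo_bound W r : 0 <= W -> 0 <= r < 1 -> exists K, forall n, Dn W n * r ^ n <= K.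
Proof.
  intros HW Hr. set (x := fun n => Dn W n * r ^ n).
  assert (Hx : forall n, 0 <= x n).
  { intros n. unfold x. apply Rmult_le_pos. apply Dn_nonneg; auto. apply pow_le; lra. }
  destruct (nat_unbounded (W / (1 - r))) as [N0 HN0].
  assert (Hdec : forall n, (N0 <= n)%nat -> x (S n) <= x n).
  { intros n Hn. unfold x. simpl.
    assert (Hn' : W / (1 - r) < INR n). { apply le_INR in Hn. lra. }
    assert (Hq : r * (W + INR n) <= INR n + 1).
    { apply Rmult_lt_compat_r with (r := 1 - r) in Hn'; [|lra].
      unfold Rdiv in Hn'. rewrite Rmult_assoc, Rinv_l in Hn' by lra. nra. }
    assert (Hd : 0 <= Dn W n) by (apply Dn_nonneg; auto).
    assert (Hp : 0 <= r ^ n) by (apply pow_le; lra).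
    assert (Hi : (W + INR n) / (INR n + 1) * r <= 1).
    { apply Rmult_le_reg_r with (INR n + 1). generalize (pos_INR n); lra.
      unfold Rdiv. field_simplify. lra. generalize (pos_INR n); lra. }
    replace (Dn W n * ((W + INR n) / (INR n + 1)) * (r * r ^ n)) with
      ((Dn W n * r ^ n) * ((W + INR n) / (INR n + 1) * r)) by ring.
    assert (0 <= Dn W n * r ^ n) by (apply Rmult_le_pos; auto).
    assert (0 <= (W + INR n) / (INR n + 1) * r).
    { apply Rmult_le_pos; [|lra]. apply Rmult_le_pos. generalize (pos_INR n); lra.
      apply Rlt_le, Rinv_0_lt_compat. generalize (pos_INR n); lra. }
    nra. }
  exists (sum_f_R0 x N0). intros n. fold (x n). induction n.
  - apply term_le_sum; auto. lia.
  - destruct (Compare_dec.le_lt_dec (S n) N0). apply term_le_sum; auto.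
    eapply Rle_trans. apply Hdec. lia. auto.
Qed.

Lemma cbinom_S w l : cbinom w (S l) =
  Cmult (cbinom w l) (Cmult (Cminus w (RtoC (INR l))) (RtoC (/ INR (S l)))).
Proof.
  unfold cbinom. simpl cfalling. rewrite fact_simpl, mult_INR.
  assert (H1 := INR_fact_neq_0 l). assert (H2 : INR (S l) <> 0) by (apply not_0_INR; lia).
  rewrite RtoC_mult, RtoC_inv by auto.
  assert (H3 : RtoC (INR (S l)) <> RtoC 0) by (intro E; injection E; auto).
  assert (H4 : RtoC (INR (Factorial.fact l)) <> RtoC 0) by (intro E; injection E; auto).
  field. split; auto.
Qed.

Lemma N1_cbinom w l : N1 (cbinom w l) <= Dn (N1 w) l.
Proof.
  induction l; simpl Dn.
  - assert (E : cbinom w 0 = RtoC 1).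
    { unfold cbinom. simpl cfalling. change (INR (Factorial.fact 0)) with 1.
      rewrite <- RtoC_inv by lra. rewrite Rinv_1. ring. }
    rewrite E, N1_RtoC, Rabs_R1. lra.
  - rewrite cbinom_S. eapply Rle_trans. apply N1_mult.
    assert (Hn := pos_INR l).
    apply Rmult_le_compat. apply N1_pos. apply N1_pos. auto.
    eapply Rle_trans. apply N1_mult. rewrite N1_RtoC. rewrite Rabs_pos_eq.
    2: apply Rlt_le, Rinv_0_lt_compat; rewrite S_INR; lra.
    rewrite S_INR. unfold Rdiv. apply Rmult_le_compat_r. apply Rlt_le, Rinv_0_lt_compat; lra.
    destruct w as [a b]. unfold N1, Cminus, Cplus, Copp, RtoC, Re, Im; simpl.
    replace (b + - 0) with b by ring.
    assert (Rabs (- INR l) = INR l) by (rewrite Rabs_Ropp; apply Rabs_pos_eq; lra). generalize (Rabs_triang a (- INR l)). lra.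
Qed.

Lemma binom_dom (w : C) (x : R) : 0 <= x < 1 ->
  ex_series (fun l => N1 (cbinom w l) * x ^ l).
Proof.
  intros Hx. set (r := (1 + x) / 2).
  destruct (Dn_geo_bound (N1 w) r (N1_pos w)) as [K HK]. unfold r; lra.
  apply (exs_le _ (fun l => K * (x / r) ^ l)).
  - intros l. rewrite Rabs_pos_eq. 2: apply Rmult_le_pos; [apply N1_pos|apply pow_le; lra].
    assert (Hr : 0 < r) by (unfold r; lra).
    replace (N1 (cbinom w l) * x ^ l) with (N1 (cbinom w l) * r ^ l * (x / r) ^ l).
    2: { unfold Rdiv. rewrite Rpow_mult_distr, pow_inv. field. apply pow_nonzero; lra. }
    apply Rmult_le_compat_r. apply pow_le. apply Rmult_le_pos; [lra|apply Rlt_le, Rinv_0_lt_compat; lra].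
    eapply Rle_trans. 2: apply (HK l). apply Rmult_le_compat_r. apply pow_le; lra. apply N1_cbinom.
  - apply exs_scal_l. apply ex_series_geom. rewrite Rabs_pos_eq.
    unfold r. apply Rmult_lt_reg_r with ((1 + x) / 2). lra. unfold Rdiv. field_simplify; lra.
    apply Rmult_le_pos; [lra|]. apply Rlt_le, Rinv_0_lt_compat; unfold r; lra.
Qed.

Definition bw (s : C) := Copp s.
Definition bar (s : C) := fun l => Re (cbinom (bw s) l).
Definition bai (s : C) := fun l => Im (cbinom (bw s) l).

Lemma rec_re {s : C} n : INR (S n) * (bar s) (S n) = (bar s) n * (Re (bw s) - INR n) - (bai s) n * Im (bw s).
Proof.
  unfold bar, bai. rewrite cbinom_S. assert (H : INR (S n) <> 0) by (apply not_0_INR; lia).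
  destruct (cbinom (bw s) n) as [x y]. destruct (bw s) as [a b].
  unfold Cmult, Cminus, Cplus, Copp, RtoC, Re, Im; simpl. field; auto.
Qed.

Lemma rec_im {s : C} n : INR (S n) * (bai s) (S n) = (bar s) n * Im (bw s) + (bai s) n * (Re (bw s) - INR n).
Proof.
  unfold bar, bai. rewrite cbinom_S. assert (H : INR (S n) <> 0) by (apply not_0_INR; lia).
  destruct (cbinom (bw s) n) as [x y]. destruct (bw s) as [a b].
  unfold Cmult, Cminus, Cplus, Copp, RtoC, Re, Im; simpl. field; auto.
Qed.

Lemma radius_gen {s : C} (a : nat -> R) (x : R) : (forall n, Rabs (a n) <= N1 (cbinom (bw s) n)) ->
  Rabs x < 1 -> Rbar_lt (Rabs x) (CV_radius a).
Proof.
  intros Ha Hx. set (r := (Rabs x + 1) / 2).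
  destruct (Dn_geo_bound (N1 (bw s)) r (N1_pos (bw s))) as [K HK].
  { unfold r. generalize (Rabs_pos x). lra. }
  destruct (CV_radius_bounded a) as [Hub _].
  apply Rbar_lt_le_trans with (Finite r). simpl. unfold r; lra.
  apply Hub. exists K. intros n. rewrite Rabs_mult, (Rabs_pos_eq (r ^ n)).
  2: apply pow_le; unfold r; generalize (Rabs_pos x); lra.
  eapply Rle_trans. 2: apply (HK n). apply Rmult_le_compat_r.
  apply pow_le; unfold r; generalize (Rabs_pos x); lra.
  eapply Rle_trans. apply Ha. apply N1_cbinom.
Qed.

Lemma rad_ar {s : C} x : Rabs x < 1 -> Rbar_lt (Rabs x) (CV_radius (bar s)).
Proof.
  apply (radius_gen (s:=s)). intros n. unfold bar, N1. generalize (Rabs_pos (Im (cbinom (bw s) n))); lra.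
Qed.
Lemma rad_ai {s : C} x : Rabs x < 1 -> Rbar_lt (Rabs x) (CV_radius (bai s)).
Proof.
  apply (radius_gen (s:=s)). intros n. unfold bai, N1. generalize (Rabs_pos (Re (cbinom (bw s) n))); lra.
Qed.

Lemma ode_gen (a b : nat -> R) (c1 c2 : R) (x : R) :
  Rbar_lt (Rabs x) (CV_radius a) -> Rbar_lt (Rabs x) (CV_radius b) ->
  (forall n, INR (S n) * a (S n) = a n * (c1 - INR n) - b n * c2) ->
  (1 + x) * PSeries (PS_derive a) x = c1 * PSeries a x - c2 * PSeries b x.
Proof.
  intros Ha Hb Hrec.
  assert (Ea := CV_radius_inside _ _ Ha). assert (Eb := CV_radius_inside _ _ Hb).
  assert (Ed := ex_pseries_derive _ _ Ha).
  replace ((1 + x) * PSeries (PS_derive a) x) with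
    (PSeries (PS_derive a) x + PSeries (PS_incr_1 (PS_derive a)) x).
  2: { rewrite PSeries_incr_1. ring. }
  rewrite <- PSeries_plus; auto. 2: apply ex_pseries_incr_1; auto.
  rewrite <- !PSeries_scal, <- PSeries_minus.
  2,3: apply ex_pseries_scal; auto; apply Rmult_comm.
  apply PSeries_ext. intros n. unfold PS_plus, PS_minus, PS_scal, PS_incr_1, PS_derive.
  change (plus ?u ?v) with (u + v). change (scal ?u ?v) with (u * v).
  change (opp ?u) with (- u).
  destruct n as [|n].
  - change (zero : R) with 0. rewrite Hrec. simpl. ring.
  - rewrite Hrec. ring.
Qed.

Definition bA (s : C) := PSeries (bar s).
Definition bB (s : C) := PSeries (bai s).
Definition bP (s : C) := fun t => exp (Re s * ln (1 + t)) * cos (Im s * ln (1 + t)).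
Definition bQ (s : C) := fun t => exp (Re s * ln (1 + t)) * sin (Im s * ln (1 + t)).
Definition bh1 (s : C) := fun t => bA s t * bP s t - bB s t * bQ s t.
Definition bh2 (s : C) := fun t => bA s t * bQ s t + bB s t * bP s t.

Lemma dA {s : C} t : Rabs t < 1 -> Derive (PSeries (bar s)) t = (- Re s * (bA s) t + Im s * (bB s) t) / (1 + t).
Proof.
  intros Ht. assert (-1 < t) by (apply Rabs_def2 in Ht; lra).
  rewrite Derive_PSeries by (apply rad_ar; auto).
  apply Rmult_eq_reg_l with (1 + t). 2: lra.
  rewrite (ode_gen (bar s) (bai s) (Re (bw s)) (Im (bw s)) t (rad_ar t Ht) (rad_ai t Ht) rec_re).
  unfold bA, bB, bw. change (Re (Copp s)) with (- Re s). change (Im (Copp s)) with (- Im s). field. lra.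
Qed.

Lemma dB {s : C} t : Rabs t < 1 -> Derive (PSeries (bai s)) t = (- Im s * (bA s) t - Re s * (bB s) t) / (1 + t).
Proof.
  intros Ht. assert (-1 < t) by (apply Rabs_def2 in Ht; lra).
  rewrite Derive_PSeries by (apply rad_ai; auto).
  apply Rmult_eq_reg_l with (1 + t). 2: lra.
  rewrite (ode_gen (bai s) (bar s) (Re (bw s)) (- Im (bw s)) t (rad_ai t Ht) (rad_ar t Ht)).
  unfold bA, bB, bw. change (Re (Copp s)) with (- Re s). change (Im (Copp s)) with (- Im s). field. lra.
  intros n. rewrite rec_im. ring.
Qed.

Lemma h1_deriv {s : C} t : Rabs t < 1 -> is_derive (bh1 s) t 0.
Proof.
  intros Ht. assert (-1 < t) by (apply Rabs_def2 in Ht; lra).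
  unfold bh1, bA, bB, bP, bQ. auto_derive.
  - repeat split; try lra; apply ex_derive_PSeries; [apply rad_ar|apply rad_ai]; auto.
  - change (fun x => PSeries (bar s) x) with (PSeries (bar s)). change (fun x => PSeries (bai s) x) with (PSeries (bai s)).
    rewrite (dA t Ht), (dB t Ht). unfold bA, bB. field. lra.
Qed.

Lemma h2_deriv {s : C} t : Rabs t < 1 -> is_derive (bh2 s) t 0.
Proof.
  intros Ht. assert (-1 < t) by (apply Rabs_def2 in Ht; lra).
  unfold bh2, bA, bB, bP, bQ. auto_derive.
  - repeat split; try lra; apply ex_derive_PSeries; [apply rad_ar|apply rad_ai]; auto.
  - change (fun x => PSeries (bar s) x) with (PSeries (bar s)). change (fun x => PSeries (bai s) x) with (PSeries (bai s)).
    rewrite (dA t Ht), (dB t Ht). unfold bA, bB. field. lra.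
Qed.

Lemma const_on (h : R -> R) t : 0 <= t < 1 -> (forall x, Rabs x < 1 -> is_derive h x 0) -> h t = h 0.
Proof.
  intros Ht Hd. destruct (MVT_gen h 0 t (fun _ => 0)) as [c [_ Hc]].
  - intros x Hx. apply Hd. rewrite Rmin_left, Rmax_right in Hx by lra. apply Rabs_def1; lra.
  - intros x Hx. rewrite Rmin_left, Rmax_right in Hx by lra.
    apply continuity_pt_filterlim. apply (ex_derive_continuous h x). exists 0. apply Hd.
    apply Rabs_def1; lra.
  - lra.
Qed.

Lemma ar0 {s : C} : (bar s) 0 = 1.
Proof.
  unfold bar, cbinom. simpl cfalling. change (INR (Factorial.fact 0)) with 1.
  rewrite <- RtoC_inv by lra. rewrite Rinv_1. simpl. ring.
Qed.
Lemma ai0 {s : C} : (bai s) 0 = 0.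
Proof.
  unfold bai, cbinom. simpl cfalling. change (INR (Factorial.fact 0)) with 1.
  rewrite <- RtoC_inv by lra. rewrite Rinv_1. simpl. ring.
Qed.

Lemma binom_series (s : C) t : 0 <= t < 1 ->
  csum (fun l => Cmult (cbinom (Copp s) l) (RtoC (t ^ l))) = Cinv (cpow (1 + t) s).
Proof.
  intros Ht. assert (Ht' : Rabs t < 1) by (apply Rabs_def1; lra).
  assert (H1 : (bh1 s) t = 1).
  { rewrite (const_on (bh1 s) t Ht h1_deriv). unfold bh1, bA, bB, bP, bQ.
    rewrite !PSeries_0, ar0, ai0, Rplus_0_r, ln_1, !Rmult_0_r, exp_0, cos_0, sin_0. ring. }
  assert (H2 : (bh2 s) t = 0).
  { rewrite (const_on (bh2 s) t Ht h2_deriv). unfold bh2, bA, bB, bP, bQ.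
    rewrite !PSeries_0, ar0, ai0, Rplus_0_r, ln_1, !Rmult_0_r, exp_0, cos_0, sin_0. ring. }
  assert (Ecs : csum (fun l => Cmult (cbinom (Copp s) l) (RtoC (t ^ l))) = ((bA s) t, (bB s) t)).
  { unfold csum, bA, bB. f_equal; rewrite PSeries_eq; apply Series_ext; intros n;
    unfold bar, bai, bw; destruct (cbinom (Copp s) n) as [x y];
    change (scal ?u ?v) with (u * v).
    - transitivity (t ^ n * x). unfold Cmult, RtoC, Re, Im; simpl; ring.
      f_equal; try reflexivity; symmetry; apply pow_n_pow.
    - transitivity (t ^ n * y). unfold Cmult, RtoC, Re, Im; simpl; ring.
      f_equal; try reflexivity; symmetry; apply pow_n_pow. }
  assert (Ecp : cpow (1 + t) s = ((bP s) t, (bQ s) t)) by reflexivity.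
  rewrite Ecs, Ecp.
  assert (Prod : Cmult ((bA s) t, (bB s) t) ((bP s) t, (bQ s) t) = RtoC 1).
  { unfold Cmult, RtoC; simpl. unfold bh1, bh2 in *. f_equal; lra. }
  assert (NZ : ((bP s) t, (bQ s) t) <> RtoC 0).
  { intros E. rewrite E in Prod. unfold Cmult, RtoC in Prod. simpl in Prod.
    injection Prod. lra. }
  rewrite <- (Cmult_1_r ((bA s) t, (bB s) t)). rewrite <- (Cinv_r ((bP s) t, (bQ s) t)) by auto.
  rewrite Cmult_assoc, Prod. ring.
Qed.


Lemma cpow_mult x y s : 0 < x -> 0 < y -> cpow (x * y) s = Cmult (cpow x s) (cpow y s).
Proof.
  intros Hx Hy. unfold cpow. rewrite ln_mult by auto.
  rewrite !Rmult_plus_distr_l, exp_plus, cos_plus, sin_plus.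
  unfold Cmult, Re, Im; simpl. f_equal; ring.
Qed.

Lemma cpow_add_nat x s l : 0 < x ->
  cpow x (Cplus s (RtoC (INR l))) = Cmult (cpow x s) (RtoC (x ^ l)).
Proof.
  intros Hx. rewrite <- (Rpower_pow l x Hx). unfold cpow, Rpower. simpl.
  rewrite Rplus_0_r, Rmult_plus_distr_r, exp_plus. unfold Cmult, Re, Im; simpl. f_equal; ring.
Qed.

Lemma cpow_inv_form x s : 0 < x -> Cinv (cpow x s) =
  (Rpower x (- Re s) * cos (Im s * ln x), - (Rpower x (- Re s) * sin (Im s * ln x))).
Proof.
  intros Hx. unfold cpow, Cinv, Rpower. simpl fst; simpl snd.
  assert (E : exp (- Re s * ln x) = / exp (Re s * ln x)).
  { rewrite <- exp_Ropp. f_equal. ring. }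
  rewrite E. assert (P := exp_pos (Re s * ln x)).
  assert (S2 := sin2_cos2 (Im s * ln x)). unfold Rsqr in S2.
  set (a := exp (Re s * ln x)) in *. set (c := cos (Im s * ln x)) in *.
  set (d := sin (Im s * ln x)) in *.
  assert (ED : (a * c) ^ 2 + (a * d) ^ 2 = a ^ 2).
  { replace ((a * c) ^ 2 + (a * d) ^ 2) with (a ^ 2 * (d * d + c * c)) by ring. rewrite S2. ring. }
  rewrite ED. f_equal; field; lra.
Qed.

Lemma cpow_nonzero x s : 0 < x -> cpow x s <> RtoC 0.
Proof.
  intros Hx E. assert (S2 := sin2_cos2 (Im s * ln x)). unfold Rsqr in S2.
  unfold cpow in E. injection E; intros E2 E1.
  assert (P := exp_pos (Re s * ln x)).
  apply Rmult_integral in E1. apply Rmult_integral in E2. nra.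
Qed.

Lemma N1_cinv_cpow x s : 0 < x -> N1 (Cinv (cpow x s)) <= 2 * Rpower x (- Re s).
Proof.
  intros Hx. rewrite cpow_inv_form by auto. unfold N1. cbn [Re Im fst snd].
  rewrite Rabs_Ropp, !Rabs_mult. rewrite (Rabs_pos_eq (Rpower _ _)) by (apply Rlt_le, exp_pos).
  assert (P : 0 < Rpower x (- Re s)) by apply exp_pos.
  assert (C1 : Rabs (cos (Im s * ln x)) <= 1) by (apply Rabs_le; apply COS_bound).
  assert (C2 : Rabs (sin (Im s * ln x)) <= 1) by (apply Rabs_le; apply SIN_bound).
  nra.
Qed.

Lemma Cmod_le_N1 u : Cmod u <= N1 u.
Proof.
  unfold Cmod, N1, Re, Im. destruct u as [a b]; simpl.
  rewrite <- (sqrt_pow2 (Rabs a + Rabs b)). 2: generalize (Rabs_pos a) (Rabs_pos b); lra.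
  apply sqrt_le_1_alt. assert (A1 := pow2_abs a). assert (A2 := pow2_abs b).
  generalize (Rabs_pos a) (Rabs_pos b); nra.
Qed.

Lemma N1_le_Cmod u : N1 u <= 2 * Cmod u.
Proof.
  unfold N1. assert (H1 := re_le_Cmod u).
  assert (H2 : Rabs (Im u) <= Cmod u).
  { unfold Cmod. rewrite <- sqrt_Rsqr_abs. apply sqrt_le_1_alt. unfold Rsqr.
    destruct u as [a b]; unfold Im; simpl. nra. }
  lra.
Qed.

Lemma Cmod_pow_n z M : Cmod (pow_n z M) = Cmod z ^ M.
Proof.
  induction M; simpl. apply Cmod_1.
  change (mult z (pow_n z M)) with (Cmult z (pow_n z M)). rewrite Cmod_mult, IHM. auto.
Qed.

Lemma N1_zpow z M Y : N1 (Cmult (pow_n z M) Y) <= 2 * Cmod z ^ M * N1 Y.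
Proof.
  eapply Rle_trans. apply N1_le_Cmod. rewrite Cmod_mult, Cmod_pow_n.
  assert (0 <= Cmod z ^ M) by (apply pow_le, Cmod_ge_0).
  assert (HY := Cmod_le_N1 Y). nra.
Qed.

Lemma qnum_bound q l : 1 < q -> 0 < / qnum q (S l) <= (/ q) ^ l.
Proof.
  intros Hq. unfold qnum.
  assert (H1 : 1 <= q ^ l) by (apply pow_R1_Rle; lra).
  assert (H2 : q ^ l * (q - 1) <= q ^ S l - 1) by (simpl; nra).
  assert (H3 : 0 < q ^ l * (q - 1)) by nra.
  rewrite pow_inv. split.
  - apply Rinv_0_lt_compat. apply Rdiv_lt_0_compat; lra.
  - replace (/ ((q ^ S l - 1) / (q - 1))) with ((q - 1) / (q ^ S l - 1)) by (field; lra).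
    apply Rle_trans with ((q - 1) * / (q ^ l * (q - 1))).
    unfold Rdiv. apply Rmult_le_compat_l. lra. apply Rinv_le_contravar; auto.
    apply Req_le. field. split; lra.
Qed.


Lemma Series_zero : Series (fun _ => 0) = 0.
Proof.
  rewrite (Series_ext _ (fun n => 0 * 1)). rewrite Series_scal_l. ring. intros; ring.
Qed.

Lemma csum_RtoC (v : nat -> R) : csum (fun n => RtoC (v n)) = RtoC (Series v).
Proof. unfold csum, RtoC; simpl. f_equal. apply Series_zero. Qed.

Lemma geo_tail q l : 1 < q ->
  Series (fun n => ((/ q) ^ S l) ^ S n) = / qnum q (S l) / (q - 1).
Proof.
  intros Hq. assert (H1 : 1 <= q ^ l) by (apply pow_R1_Rle; lra).
  assert (H2 : 1 < q ^ S l) by (simpl; nra).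
  set (x := (/ q) ^ S l).
  assert (Ex : x = / q ^ S l) by (unfold x; apply pow_inv).
  assert (Hx0 : 0 < x) by (rewrite Ex; apply Rinv_0_lt_compat; lra).
  assert (Hx1 : x < 1) by (rewrite Ex; rewrite <- Rinv_1; apply Rinv_lt_contravar; lra).
  rewrite (Series_ext _ (fun n => x * x ^ n)) by (intros; reflexivity).
  rewrite Series_scal_l, Series_geom by (rewrite Rabs_pos_eq; lra).
  rewrite Ex. unfold qnum. field. repeat split; lra.
Qed.

Lemma expand (Z0 : C) s X a : 1 <= X -> 0 < a < 1 ->
  Cmult Z0 (Cinv (cpow (X + a) s)) =
  csum (fun l => Cmult (Cmult (cbinom (Copp s) l) (RtoC (a ^ l)))
                       (Cmult Z0 (Cinv (cpow X (Cplus s (RtoC (INR l))))))).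
Proof.
  intros HX Ha. set (t := a / X).
  assert (Ht : 0 <= t < 1).
  { unfold t. split. apply Rlt_le, Rdiv_lt_0_compat; lra.
    apply Rmult_lt_reg_r with X. lra. unfold Rdiv. rewrite Rmult_assoc, Rinv_l; lra. }
  assert (E1 : X + a = X * (1 + t)) by (unfold t; field; lra).
  rewrite E1, cpow_mult by lra.
  assert (NZ1 := cpow_nonzero X s ltac:(lra)).
  assert (NZ2 := cpow_nonzero (1 + t) s ltac:(lra)).
  replace (Cinv (Cmult (cpow X s) (cpow (1 + t) s))) with
    (Cmult (Cinv (cpow X s)) (Cinv (cpow (1 + t) s))) by (field; auto).
  rewrite <- binom_series by auto.
  rewrite Cmult_assoc. rewrite <- csum_scal.
  2: { apply (cex_dom _ (fun l => N1 (cbinom (Copp s) l) * t ^ l)).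
       intros l. eapply Rle_trans. apply N1_mult. rewrite N1_RtoC, Rabs_pos_eq. lra.
       apply pow_le; lra. apply binom_dom; auto. }
  apply csum_ext. intros l. rewrite cpow_add_nat by lra.
  assert (NZ3 : RtoC (X ^ l) <> RtoC 0).
  { intros E; injection E; apply pow_nonzero; lra. }
  assert (E2 : RtoC (t ^ l) = Cmult (RtoC (a ^ l)) (Cinv (RtoC (X ^ l)))).
  { unfold t, Rdiv. rewrite Rpow_mult_distr, pow_inv, RtoC_mult, RtoC_inv. auto.
    apply pow_nonzero; lra. }
  rewrite E2. field. split; auto.
Qed.

Lemma main_j (q : R) (j : nat) (z s : C) (p K0 : R) :
  1 < q -> (1 <= j)%nat -> z <> RtoC 0 -> INR j < p -> 0 <= K0 ->
  (forall M, Cmod z ^ M * Rpower (INR M + INR j) (- Re s) <= K0 * Rpower (INR M + INR j) (- p)) ->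
  jackson01 q (fun a => Phi j z s (a + INR j)) =
  Cmult (Cinv (pow_n z j))
    (csum (fun l => Cmult (cbinom (Copp s) l)
                          (Cmult (Li j z (Cplus s (RtoC (INR l))))
                                 (RtoC (/ qnum q (S l)))))).
Proof.
  intros Hq Hj Hz Hp HK0 HK.
  assert (HjR : 1 <= INR j) by (apply (le_INR 1); auto).
  assert (HX : forall M, 1 <= INR M + INR j) by (intros M; generalize (pos_INR M); lra).
  set (hh := fun M => 4 * K0 * Rpower (INR M + INR j) (- p)).
  assert (Hhh : forall M, 0 <= hh M).
  { intros M. unfold hh. apply Rmult_le_pos. lra. apply Rlt_le, exp_pos. }
  assert (Shh : summ j hh).
  { destruct (summ_pow j p (INR j) Hp HjR) as [_ [S1 _]].
    destruct (summ_scal j (4 * K0) _ ltac:(lra) S1) as [S2 _]. exact S2. }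
  set (Y := fun l M => Cmult (pow_n z M) (Cinv (cpow (INR M + INR j) (Cplus s (RtoC (INR l)))))).
  assert (BY : forall l M, N1 (Y l M) <= hh M).
  { intros l M. unfold Y, hh. eapply Rle_trans. apply N1_zpow.
    assert (E : Re (Cplus s (RtoC (INR l))) = Re s + INR l) by (unfold Re, Cplus, RtoC; simpl; ring).
    assert (B1 := N1_cinv_cpow (INR M + INR j) (Cplus s (RtoC (INR l))) ltac:(generalize (HX M); lra)).
    rewrite E in B1.
    assert (B2 : Rpower (INR M + INR j) (- (Re s + INR l)) <= Rpower (INR M + INR j) (- Re s)).
    { apply Rle_Rpower; auto. generalize (pos_INR l); lra. }
    assert (B3 := HK M). assert (0 <= Cmod z ^ M) by (apply pow_le, Cmod_ge_0).
    nra. }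
  set (e := fun l => N1 (cbinom (Copp s) l) * (/ q) ^ l).
  assert (Hq1 : 0 < / q < 1).
  { split. apply Rinv_0_lt_compat; lra. rewrite <- Rinv_1. apply Rinv_lt_contravar; lra. }
  assert (He : forall l, 0 <= e l).
  { intros l. unfold e. apply Rmult_le_pos. apply N1_pos. apply pow_le; lra. }
  assert (Hse : ex_series e) by (apply binom_dom; lra).
  set (Lz := fun l => msum 0 j (Y l)).
  set (Hs := msumR j hh).
  assert (HHs : 0 <= Hs) by (apply msumR_nonneg; auto).
  assert (BLz : forall l, N1 (Lz l) <= Hs) by (intros l; apply msum_bound; auto).
  set (cb := cbinom (Copp s)).
  set (G := fun n l => Cmult (Cmult (cb l) (Lz l)) (RtoC (((/ q) ^ S l) ^ S n))).
  assert (Term : forall n, Cmult (Phi j z s (/ q ^ S n + INR j)) (RtoC (/ q ^ S n)) =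
                           csum (fun l => G n l)).
  { intros n. set (a := / q ^ S n).
    assert (Ea : a = (/ q) ^ S n) by (unfold a; symmetry; apply pow_inv).
    assert (Ha : 0 < a < 1).
    { rewrite Ea. split. apply pow_lt; lra. apply pow_lt_1_compat. lra. lia. }
    assert (Haq : a <= / q).
    { rewrite Ea. simpl. assert ((/ q) ^ n <= 1) by (rewrite <- (pow1 n); apply pow_incr; lra).
      assert (0 <= (/ q) ^ n) by (apply pow_le; lra). nra. }
    set (F := fun M l => Cmult (Cmult (cb l) (RtoC (a ^ l))) (Y l M)).
    assert (BF : forall M l, N1 (F M l) <= hh M * e l).
    { intros M l. unfold F, e. eapply Rle_trans. apply N1_mult.
      eapply Rle_trans. apply Rmult_le_compat_r. apply N1_pos. apply N1_mult.
      rewrite N1_RtoC, Rabs_pos_eq by (apply pow_le; lra).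
      assert (P1 : a ^ l <= (/ q) ^ l) by (apply pow_incr; lra).
      assert (P2 := BY l M). assert (P3 := N1_pos (cb l)). assert (P4 := N1_pos (Y l M)).
      assert (0 <= a ^ l) by (apply pow_le; lra). unfold cb in *.
      assert (N1 (cbinom (Copp s) l) * a ^ l <= N1 (cbinom (Copp s) l) * (/ q) ^ l) by
        (apply Rmult_le_compat_l; auto).
      assert (0 <= N1 (cbinom (Copp s) l) * a ^ l) by (apply Rmult_le_pos; auto).
      nra. }
    assert (E1 : Phi j z s (a + INR j) = msum 0 j (fun M => csum (F M))).
    { unfold Phi. apply msum_ext. intros M.
      replace (INR M + (a + INR j)) with ((INR M + INR j) + a) by ring.
      apply expand; auto. }
    rewrite E1. rewrite (msum_exchange j F hh e); auto.
    rewrite (csum_ext _ (fun l => Cmult (Cmult (cb l) (RtoC (a ^ l))) (Lz l))).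
    2: { intros l. unfold F, Lz. apply (msum_scal j _ _ hh); auto. }
    rewrite Cmult_comm, <- csum_scal.
    2: { apply (cex_dom _ (fun l => e l * Hs)). 2: apply ex_series_scal_r; auto.
         intros l. eapply Rle_trans. apply N1_mult. unfold e.
         eapply Rle_trans. apply Rmult_le_compat_r. apply N1_pos. apply N1_mult.
         rewrite N1_RtoC, Rabs_pos_eq by (apply pow_le; lra).
         assert (P1 : a ^ l <= (/ q) ^ l) by (apply pow_incr; lra).
         assert (0 <= a ^ l) by (apply pow_le; lra). assert (P3 := N1_pos (cb l)).
         assert (P4 := BLz l). assert (P5 := N1_pos (Lz l)). unfold cb in *.
         assert (N1 (cbinom (Copp s) l) * a ^ l <= N1 (cbinom (Copp s) l) * (/ q) ^ l) by
           (apply Rmult_le_compat_l; auto).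
         assert (0 <= N1 (cbinom (Copp s) l) * a ^ l) by (apply Rmult_le_pos; auto).
         nra. }
    apply csum_ext. intros l. unfold G.
    assert (Epow : ((/ q) ^ S l) ^ S n = a * a ^ l).
    { rewrite Ea, <- !pow_mult. replace (S l * S n)%nat with (S n + S n * l)%nat by lia.
      rewrite pow_add. reflexivity. }
    rewrite Epow, RtoC_mult. ring. }
  assert (Cq : forall l, 0 < / qnum q (S l) <= (/ q) ^ l) by (intros; apply qnum_bound; auto).
  assert (BfinK : forall l c K, 0 <= K -> 0 <= c <= K * (/ q) ^ l ->
            N1 (Cmult (cb l) (Cmult (Lz l) (RtoC c))) <= e l * Hs * K).
  { intros l c K HK' Hc. eapply Rle_trans. apply N1_mult.
    eapply Rle_trans. apply Rmult_le_compat_l. apply N1_pos. apply N1_mult.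
    rewrite N1_RtoC, Rabs_pos_eq by lra. unfold e.
    assert (P3 := N1_pos (cb l)). assert (P4 := BLz l). assert (P5 := N1_pos (Lz l)).
    unfold cb in *.
    assert (N1 (Lz l) * c <= Hs * (K * (/ q) ^ l)) by (apply Rmult_le_compat; lra).
    assert (0 <= N1 (Lz l) * c) by (apply Rmult_le_pos; lra).
    replace (N1 (cbinom (Copp s) l) * (/ q) ^ l * Hs * K) with
      (N1 (cbinom (Copp s) l) * (Hs * (K * (/ q) ^ l))) by ring.
    apply Rmult_le_compat_l; auto. }
  assert (Bfin : forall l c, 0 <= c <= (/ q) ^ l ->
            N1 (Cmult (cb l) (Cmult (Lz l) (RtoC c))) <= e l * Hs).
  { intros l c Hc. rewrite <- (Rmult_1_r (e l * Hs)). apply BfinK; lra. }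
  assert (ExF : cex (fun l => Cmult (cb l) (Cmult (Lz l) (RtoC (/ qnum q (S l)))))).
  { apply (cex_dom _ (fun l => e l * Hs)). intros l. apply Bfin. generalize (Cq l); lra.
    apply ex_series_scal_r; auto. }
  assert (Hqq : 0 < q - 1) by lra.
  transitivity (csum (fun l => Cmult (cb l) (Cmult (Lz l) (RtoC (/ qnum q (S l)))))).
  - unfold jackson01.
    rewrite (csum_ext _ (fun n => csum (fun l => G n l))) by (intros n; apply Term).
    assert (ExA : ex_series (fun n => (/ q) ^ S n)).
    { apply (ex_series_ext (fun n => / q * (/ q) ^ n)). intros; reflexivity.
      apply exs_scal_l, ex_series_geom. rewrite Rabs_pos_eq; lra. }
    rewrite (fubini_C G (fun n => (/ q) ^ S n) (fun l => e l * Hs)); auto.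
    2: { intros n l. unfold G.
         assert (Ex : ((/ q) ^ S l) ^ S n = (/ q) ^ S n * ((/ q) ^ l * (/ q) ^ (n * l))).
         { rewrite <- !pow_mult, <- !pow_add. f_equal. lia. }
         assert (0 <= (/ q) ^ (n * l) <= 1).
         { split. apply pow_le; lra. rewrite <- (pow1 (n * l)); apply pow_incr; lra. }
         assert (0 < (/ q) ^ S n) by (apply pow_lt; lra).
         assert (0 <= (/ q) ^ l) by (apply pow_le; lra).
         rewrite <- Cmult_assoc, Ex.
         assert (B := Bfin l ((/ q) ^ l * (/ q) ^ (n * l)) ltac:(split; nra)).
         rewrite <- (Cmult_1_r (Cmult (Lz l) _)) in B.
         replace (RtoC ((/ q) ^ S n * ((/ q) ^ l * (/ q) ^ (n * l)))) with
            (Cmult (RtoC ((/ q) ^ S n)) (RtoC ((/ q) ^ l * (/ q) ^ (n * l)))) by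
            (rewrite <- RtoC_mult; auto).
         replace (Cmult (cb l) (Cmult (Lz l) (Cmult (RtoC ((/ q) ^ S n)) (RtoC ((/ q) ^ l * (/ q) ^ (n * l))))))
           with (Cmult (RtoC ((/ q) ^ S n)) (Cmult (cb l) (Cmult (Lz l) (RtoC ((/ q) ^ l * (/ q) ^ (n * l)))))) by ring.
         eapply Rle_trans. apply N1_mult. rewrite N1_RtoC, Rabs_pos_eq by lra.
         rewrite Cmult_1_r in B. apply Rmult_le_compat_l; lra. }
    2: { intros n; apply pow_le; lra. }
    2: { intros l; apply Rmult_le_pos; auto. }
    2: { apply ex_series_scal_r; auto. }
    rewrite (csum_ext _ (fun l => Cmult (Cmult (cb l) (Lz l)) (RtoC (/ qnum q (S l) / (q - 1))))).
    2: { intros l. unfold G. rewrite csum_scal. rewrite csum_RtoC, geo_tail; auto.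
         apply (cex_dom _ (fun n => ((/ q) ^ S l) ^ S n)).
         intros n. rewrite N1_RtoC, Rabs_pos_eq. lra. apply pow_le, pow_le; lra.
         apply (ex_series_ext (fun n => (/ q) ^ S l * ((/ q) ^ S l) ^ n)). intros; reflexivity.
         apply exs_scal_l, ex_series_geom. rewrite Rabs_pos_eq. apply pow_lt_1_compat. lra. lia.
         apply pow_le; lra. }
    rewrite <- csum_scal.
    + apply csum_ext. intros l. rewrite <- Cmult_assoc.
      replace (RtoC (/ qnum q (S l))) with (Cmult (RtoC (q - 1)) (RtoC (/ qnum q (S l) / (q - 1)))).
      ring. rewrite <- RtoC_mult. f_equal. set (x := / qnum q (S l)). field. lra.
    + apply (cex_dom _ (fun l => e l * Hs * / (q - 1))).
      2: apply ex_series_scal_r, ex_series_scal_r; auto.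
      intros l. rewrite <- Cmult_assoc. apply BfinK.
      apply Rlt_le, Rinv_0_lt_compat; lra. generalize (Cq l); intros [C1 C2].
      assert (0 < / (q - 1)) by (apply Rinv_0_lt_compat; lra).
      unfold Rdiv. split. apply Rmult_le_pos; lra. rewrite Rmult_comm.
      apply Rmult_le_compat_l; lra.
  - assert (ELi : forall l, Li j z (Cplus s (RtoC (INR l))) = Cmult (pow_n z j) (Lz l)).
    { intros l. unfold Li. rewrite msum_shift. unfold Lz.
      rewrite <- (msum_scal j _ _ hh); auto. apply msum_ext. intros M. unfold Y.
      rewrite pow_n_plus, plus_INR. change (mult ?a ?b) with (Cmult a b). ring. }
    assert (NZ : pow_n z j <> RtoC 0).
    { intros E. assert (Cmod (pow_n z j) = 0) by (rewrite E; apply Cmod_0).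
      rewrite Cmod_pow_n in H. apply Cmod_gt_0 in Hz.
      assert (0 < Cmod z ^ j) by (apply pow_lt; auto). lra. }
    rewrite (csum_ext (fun l => Cmult (cb l) (Cmult (Li j z (Cplus s (RtoC (INR l)))) (RtoC (/ qnum q (S l)))))
                      (fun l => Cmult (pow_n z j) (Cmult (cb l) (Cmult (Lz l) (RtoC (/ qnum q (S l))))))).
    2: { intros l. rewrite ELi. unfold cb. ring. }
    rewrite csum_scal by auto. field. auto.
Qed.

Theorem lemma3p1 (q : R) (k r : nat) (z s : C) :
  1 < q -> (0 < k)%nat -> (r < k)%nat -> z <> RtoC 0 ->
  (Cmod z < 1 \/ (Cmod z = 1 /\ INR k < Re s)) ->
  jackson01 q (fun a => Phi (k - r) z s (a + INR (k - r))) =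
  Cmult (Cinv (pow_n z (k - r)))
    (csum (fun l => Cmult (cbinom (Copp s) l)
                          (Cmult (Li (k - r) z (Cplus s (RtoC (INR l))))
                                 (RtoC (/ qnum q (S l)))))).
Proof.
  intros Hq Hk Hr Hz Hc.
  set (j := (k - r)%nat).
  assert (Hj : (1 <= j)%nat) by (unfold j; lia).
  assert (HjR : 1 <= INR j) by (apply (le_INR 1); auto).
  destruct Hc as [Hc | [Hc Hs]].
  - assert (Hr0 : 0 < Cmod z) by (apply Cmod_gt_0; auto).
    destruct (geo_poly (Cmod z) (INR j) (INR j + 1 - Re s) (conj Hr0 Hc) HjR) as [K [HK HKb]].
    apply (main_j q j z s (INR j + 1) K); auto. lra.
    intros M. replace (- Re s) with ((INR j + 1 - Re s) + - (INR j + 1)) by ring.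
    rewrite Rpower_plus. rewrite <- Rmult_assoc.
    apply Rmult_le_compat_r. apply Rlt_le, exp_pos. apply HKb.
  - apply (main_j q j z s (Re s) 1); auto.
    assert (INR j <= INR k) by (apply le_INR; unfold j; lia). lra. lra.
    intros M. rewrite Hc, pow1. lra.
Qed.
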